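(* Let $n\ge 2$ and $\pi\in RC(n)$. If $\pi$ is alternating ($\pi_1<\pi_2>\pi_3<\cdots$), then for every $i$ with $1<i<n$: $\pi_i>\max(\pi_1,\pi_n)$ if $i$ is even and $\pi_i<\min(\pi_1,\pi_n)$ if $i$ is odd. If $\pi$ is reverse-alternating ($\pi_1>\pi_2<\pi_3>\cdots$), then for every $i$ with $1<i<n$: $\pi_i<\min(\pi_1,\pi_n)$ if $i$ is even and $\pi_i>\max(\pi_1,\pi_n)$ if $i$ is odd.
   Context: Permutations of $[n]=\{1,\dots,n\}$ are written in one-line notation $\pi=(\pi_1,\dots,\pi_n)$; $S_n$ is the set of all of them. For a sequence $\tau=(\tau_1,\dots,\tau_m)$ of distinct numbers with $m\ge 2$, let $i(\tau)$ be the number of maximal increasing runs of consecutive entries of length at least $2$, and $d(\tau)$ the number of maximal decreasing runs of consecutive entries of length at least $2$; set $id(\tau)=i(\tau)+d(\tau)$. Equivalently, $id(\tau)=1+\#\{k: 2\le k\le m-1,\ (\tau_k-\tau_{k-1})(\tau_{k+1}-\tau_k)<0\}$. For $\pi\in S_n$, let $X(\pi)$ be the collection of all subsequences $\tau=(\pi_{j_1},\dots,\pi_{j_m})$ with $j_1<\dots<j_m$ and $m\ge 3$, and $t(\pi)=\sum_{\tau\in X(\pi)} id(\tau)$. Define $RC(n)=\{\pi\in S_n : t(\pi)=\max_{\sigma\in S_n} t(\sigma)\}$. *)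

(* Defs.v *)
From mathcomp Require Import all_boot all_order all_algebra.
Set Implicit Arguments. Unset Strict Implicit. Unset Printing Implicit Defensive.
Import Order.TTheory GRing.Theory Num.Theory.

(* pi is a permutation of [n] = {1,...,n} in one-line notation *)
Definition is_perm (n : nat) (pi : seq nat) : Prop := perm_eq pi (iota 1 n).

(* id(tau) = 1 + #{k : 2 <= k <= m-1, (tau_k - tau_{k-1})(tau_{k+1} - tau_k) < 0}
   (1-based k); here 0-based: 1 <= k < m - 1. Differences taken in int. *)
Definition idn (tau : seq nat) : nat :=
  1 + \sum_(1 <= k < (size tau).-1)
        (((nth 0 tau k)%:Z - (nth 0 tau k.-1)%:Z) *
         ((nth 0 tau k.+1)%:Z - (nth 0 tau k)%:Z) < 0)%R.

(* t(pi) = sum over all subsequences (selected by a set of positions, i.e. a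
   mask) with at least 3 entries, of id of the subsequence. *)
Definition tsum (pi : seq nat) : nat :=
  \sum_(b : (size pi).-tuple bool | 3 <= count id b) idn (mask b pi).

Definition RC (n : nat) (pi : seq nat) : Prop :=
  is_perm n pi /\ forall sigma, is_perm n sigma -> tsum sigma <= tsum pi.

(* 1-based entry pi_i *)
Definition entry (pi : seq nat) (i : nat) : nat := nth 0 pi i.-1.

Definition alternating (pi : seq nat) : Prop :=
  forall i, 1 <= i < size pi ->
    if odd i then entry pi i < entry pi i.+1 else entry pi i > entry pi i.+1.

Definition rev_alternating (pi : seq nat) : Prop :=
  forall i, 1 <= i < size pi ->
    if odd i then entry pi i > entry pi i.+1 else entry pi i < entry pi i.+1.

(* Main.v *)
Require Import Defs.
From mathcomp Require Import all_boot all_order all_algebra zify.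
Import Order.TTheory GRing.Theory Num.Theory.
Set Implicit Arguments. Unset Strict Implicit.

Definition turn (a b c : nat) : bool :=
  ((((b%:Z) - (a%:Z)) * ((c%:Z) - (b%:Z))) < 0)%R.

Lemma turnE a b c : turn a b c = ((a < b) && (c < b)) || ((b < a) && (b < c)).
Proof.
rewrite /turn; case: (boolP (_ < 0)%R) => h; apply/esym.
  apply/orP; case: (ltngtP a b) => hab; case: (ltngtP c b) => hcb; try (by left); try (by right); exfalso; nia.
apply/negbTE/negP => /orP [/andP [h1 h2] | /andP [h1 h2]]; move/negP: h; apply; nia.
Qed.

Fixpoint turns (s : seq nat) : nat :=
  match s with
  | a :: ((b :: c :: _) as t) => turn a b c + turns t
  | _ => 0
  end.

Lemma idn_turns s : idn s = 1 + turns s.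
Proof.
rewrite /idn; congr (_ + _).
elim: s => [|a t IH]; first by rewrite big_geq.
case: t IH => [|b [|c r]] IH //=; first by rewrite big_geq.
  by rewrite big_geq.
rewrite big_ltn // big_add1; congr (_ + _).
transitivity (turns [:: b, c & r]); last by [].
rewrite -IH; apply: eq_big_nat => k /andP [hk _].
by case: k hk.
Qed.

Fixpoint subs (s : seq nat) : seq (seq nat) :=
  match s with
  | [::] => [:: [::]]
  | x :: s' => map (cons x) (subs s') ++ subs s'
  end.

Lemma sum_tupleS n (F : n.+1.-tuple bool -> nat) :
  \sum_(t : n.+1.-tuple bool) F t =
  \sum_(b : bool) \sum_(t : n.-tuple bool) F [tuple of b :: t].
Proof.
rewrite pair_big /=.
rewrite (reindex (fun p : bool * n.-tuple bool => [tuple of p.1 :: p.2])) //=.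
exists (fun t : n.+1.-tuple bool => (thead t, [tuple of behead t])).
  by case=> b t _ /=; rewrite theadE; congr pair; apply: val_inj.
by move=> t _ /=; rewrite [RHS]tuple_eta.
Qed.

Lemma sum_masks (F : seq nat -> nat) s :
  \sum_(t : (size s).-tuple bool) F (mask t s) = \sum_(u <- subs s) F u.
Proof.
elim: s F => [|x s IH] F /=.
  rewrite big_cons big_nil addn0.
  rewrite (eq_bigr (fun _ => F [::])); last by move=> t _; rewrite mask0.
  by rewrite sum_nat_const card_tuple expn0 mul1n.
rewrite sum_tupleS big_bool /= big_cat big_map /=.
by congr (_ + _); apply: IH.
Qed.

Fixpoint szs (n : nat) : seq nat :=
  match n with 0 => [:: 0] | n'.+1 => map succn (szs n') ++ szs n' end.

Lemma map_size_subs s : map size (subs s) = szs (size s).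
Proof. by elim: s => //= x s IH; rewrite map_cat -map_comp -IH -map_comp. Qed.

Definition T s := \sum_(u <- subs s) turns u.

Lemma turns_small u : size u < 3 -> turns u = 0.
Proof. by case: u => [|a [|b [|c r]]]. Qed.

Definition cnt n := \sum_(k <- szs n) (3 <= k).

Lemma tsumE s : tsum s = cnt (size s) + T s.
Proof.
rewrite /tsum big_mkcond /=.
rewrite (eq_bigr (fun t : (size s).-tuple bool =>
   (fun u => if 3 <= size u then idn u else 0) (mask t s))); last first.
  by move=> t _; rewrite size_mask // size_tuple.
rewrite (sum_masks (fun u => if 3 <= size u then idn u else 0)) /cnt -map_size_subs big_map /T -big_split /=.
apply: eq_bigr => u _; rewrite idn_turns.
by case: leqP => h //; rewrite turns_small.
Qed.

Fixpoint Kr x y s := match s with [::] => 0 | z :: t => 2 ^ (size t) * turn x y z + Kr x y t end.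
Fixpoint Gr x s := match s with [::] => 0 | y :: t => Kr x y t + Gr x t end.
Fixpoint Tr s := match s with [::] => 0 | x :: t => 2 * Tr t + Gr x t end.

Lemma size_subs s : size (subs s) = 2 ^ size s.
Proof. by elim: s => //= x s IH; rewrite size_cat size_map IH expnS mul2n addnn. Qed.

Definition hh x y (u : seq nat) : nat := if u is z :: _ then turn x y z else 0.
Definition ht x (u : seq nat) : nat := if u is y :: t then hh x y t else 0.

Lemma sum_hh x y s : \sum_(u <- subs s) hh x y u = Kr x y s.
Proof.
elim: s => [|z s IH] /=; first by rewrite big_cons big_nil.
rewrite big_cat big_map /= IH; congr (_ + _).
by rewrite big_const_seq count_predT size_subs iter_addn_0 mulnC.
Qed.

Lemma sum_ht x s : \sum_(u <- subs s) ht x u = Gr x s.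
Proof.
elim: s => [|y s IH] /=; first by rewrite big_cons big_nil.
by rewrite big_cat big_map /= IH sum_hh.
Qed.

Lemma turns_cons x u : turns (x :: u) = ht x u + turns u.
Proof. by case: u => [|a [|b r]]. Qed.

Lemma T_Tr s : T s = Tr s.
Proof.
rewrite /T; elim: s => [|x s IH] /=; first by rewrite big_cons big_nil.
rewrite big_cat big_map.
rewrite (eq_bigr (fun u => ht x u + turns u)); last by move=> u _; rewrite turns_cons.
by rewrite big_split /= sum_ht IH; lia.
Qed.


Lemma Kr_cat x y s1 s2 : Kr x y (s1 ++ s2) = 2 ^ size s2 * Kr x y s1 + Kr x y s2.
Proof.
elim: s1 => [|z s1 IH] /=; first by rewrite muln0.
by rewrite IH size_cat expnD; nia.
Qed.

Lemma Kr_eqt x y x' y' s : (forall z, z \in s -> turn x' y' z = turn x y z) ->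
  Kr x' y' s = Kr x y s.
Proof.
elim: s => //= z s IH H; rewrite H ?mem_head // IH // => w hw.
by apply: H; rewrite inE hw orbT.
Qed.

Lemma Gr_eqt x x' s : (forall y z, y \in s -> z \in s -> turn x' y z = turn x y z) ->
  Gr x' s = Gr x s.
Proof.
elim: s => //= y s IH H; rewrite (@Kr_eqt x y) ?IH //.
  by move=> a b ha hb; apply: H; rewrite inE ?ha ?hb orbT.
by move=> z hz; apply: H; rewrite inE ?hz ?eqxx ?orbT.
Qed.

Definition mono_on (h : nat -> nat) (P : pred nat) :=
  forall a b, P a -> P b -> (h a < h b) = (a < b).

Lemma turn_mono h P a b c : mono_on h P -> P a -> P b -> P c ->
  turn (h a) (h b) (h c) = turn a b c.
Proof. by move=> hm pa pb pc; rewrite !turnE !hm. Qed.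

Lemma Kr_map h P x y s : mono_on h P -> P x -> P y -> all P s ->
  Kr (h x) (h y) (map h s) = Kr x y s.
Proof.
move=> hm px py; elim: s => //= z s IH /andP [pz ps].
by rewrite size_map IH // (@turn_mono h P _ _ _ hm).
Qed.

Lemma Gr_map h P x s : mono_on h P -> P x -> all P s ->
  Gr (h x) (map h s) = Gr x s.
Proof.
move=> hm px; elim: s => //= y s IH /andP [py ps].
by rewrite IH // (@Kr_map h P _ _ _ hm).
Qed.

Lemma Tr_map h P s : mono_on h P -> all P s -> Tr (map h s) = Tr s.
Proof.
move=> hm; elim: s => //= y s IH /andP [py ps].
by rewrite IH // (@Gr_map h P _ _ hm).
Qed.

Definition adj (u v : nat) := (u == v.+1) || (v == u.+1).
Definition out u v (z : nat) := (z != u) && (z != v).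

Lemma turn_out3 u v x y : adj u v -> out u v x -> out u v y ->
  [/\ turn x y u = turn x y v, turn x u y = turn x v y & turn u x y = turn v x y].
Proof.
rewrite /adj /out => ha /andP [hx1 hx2] /andP [hy1 hy2].
by split; rewrite !turnE; apply/idP/idP; lia.
Qed.

Lemma turn_mid u v b : adj u v -> out u v b -> turn v b u = turn u b v.
Proof.
rewrite /adj /out => ha /andP [hx1 hx2].
by rewrite !turnE; apply/idP/idP; lia.
Qed.

Definition rep u v (a : nat) := if a == v then u else a.

Lemma rep_mono u v : adj u v -> mono_on (rep u v) (fun a => a != u).
Proof.
rewrite /adj /rep => ha a b /= h1 h2.
case: eqP => e1; case: eqP => e2; apply/idP/idP; lia.
Qed.

Lemma map_rep u v s : all (out u v) s -> map (rep u v) s = s.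
Proof.
move=> hs; apply: map_id_in => z hz; rewrite /rep.
by move/allP: hs => /(_ z hz) /andP [_ /negbTE ->].
Qed.

Lemma all_neq u v s : all (out u v) s -> all (fun a => a != u) s.
Proof. by move=> /allP H; apply/allP => z /H /andP []. Qed.

Lemma Gr_rep u v x B C : adj u v -> out u v x -> all (out u v) B -> all (out u v) C ->
  Gr x (B ++ u :: C) = Gr x (B ++ v :: C).
Proof.
move=> ha hx hB hC.
have -> : B ++ u :: C = map (rep u v) (B ++ v :: C).
  by rewrite map_cat /= map_rep // map_rep // /rep eqxx.
have hx' : rep u v x = x by rewrite /rep; case/andP: hx => _ /negbTE ->.
rewrite -{1}hx'.
apply: (@Gr_map (rep u v) (fun a => a != u) _ _ (@rep_mono u v ha)); first by case/andP: hx.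
rewrite all_cat /= (@all_neq u v) // (@all_neq u v) // andbT.
by move: ha; rewrite /adj; case: (ltngtP u v) => //; lia.
Qed.

Lemma Tr_rep u v B C : adj u v -> all (out u v) B -> all (out u v) C ->
  Tr (B ++ u :: C) = Tr (B ++ v :: C).
Proof.
move=> ha hB hC.
have -> : B ++ u :: C = map (rep u v) (B ++ v :: C).
  by rewrite map_cat /= map_rep // map_rep // /rep eqxx.
apply: (@Tr_map (rep u v) (fun a => a != u) _ (@rep_mono u v ha)).
rewrite all_cat /= (@all_neq u v) // (@all_neq u v) // andbT.
by move: ha; rewrite /adj; case: (ltngtP u v) => //; lia.
Qed.

Lemma all_in P (s : seq nat) z : all P s -> z \in s -> P z.
Proof. by move/allP; apply. Qed.

Lemma Kr_swap u v x y B C : adj u v -> out u v x -> out u v y ->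
  Kr x y (v :: B ++ u :: C) = Kr x y (u :: B ++ v :: C).
Proof.
move=> ha hx hy /=; rewrite !size_cat /= !Kr_cat /=.
by case: (turn_out3 ha hx hy) => -> _ _.
Qed.

Lemma GD u v x A B C : adj u v -> out u v x -> all (out u v) A -> all (out u v) B ->
  all (out u v) C ->
  Gr x (A ++ v :: B ++ u :: C) + 2 ^ size C * turn x u v =
  Gr x (A ++ u :: B ++ v :: C) + 2 ^ size C * turn x v u.
Proof.
move=> ha hx hA hB hC; elim: A hA => [|a A IH] /=.
  move=> _; rewrite (@Gr_rep u v) // !Kr_cat /=.
  rewrite (@Kr_eqt x u x v B); last first.
    by move=> z hz; case: (turn_out3 ha hx (all_in hB hz)) => _ -> _.
  rewrite (@Kr_eqt x u x v C); last first.
    by move=> z hz; case: (turn_out3 ha hx (all_in hC hz)) => _ -> _.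
  lia.
move=> /andP [ha' hA]; rewrite !Kr_cat (@Kr_swap u v) // /= !size_cat /=.
by move: (IH hA); lia.
Qed.

Lemma GB u v B C : adj u v -> all (out u v) B -> all (out u v) C ->
  Gr v (B ++ u :: C) + Kr u v C = Gr u (B ++ v :: C) + Kr v u C.
Proof.
move=> ha hB hC; elim: B hB => [|b B IH] /=.
  move=> _; rewrite (@Gr_eqt u v C); first lia.
  by move=> y z hy hz; case: (turn_out3 ha (all_in hC hy) (all_in hC hz)) => _ _ ->.
move=> /andP [hb hB]; rewrite !Kr_cat /=.
rewrite (@Kr_eqt u b v b B); last first.
  by move=> z hz; case: (turn_out3 ha hb (all_in hB hz)) => _ _ ->.
rewrite (@Kr_eqt u b v b C); last first.
  by move=> z hz; case: (turn_out3 ha hb (all_in hC hz)) => _ _ ->.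
rewrite (@turn_mid u v b) //.
by move: (IH hB); lia.
Qed.

Fixpoint E u v (A : seq nat) : int :=
  if A is a :: A' then ((turn a v u)%:Z - (turn a u v)%:Z + 2 * E u v A')%R else 0%R.

Lemma TD u v A B C : adj u v -> all (out u v) A -> all (out u v) B -> all (out u v) C ->
  ((Tr (A ++ v :: B ++ u :: C))%:Z - (Tr (A ++ u :: B ++ v :: C))%:Z =
   (2 ^ size A)%:Z * ((Kr v u C)%:Z - (Kr u v C)%:Z) + (2 ^ size C)%:Z * E u v A)%R.
Proof.
move=> ha hA hB hC; elim: A hA => [|a A IH] /=.
  move=> _; rewrite (@Tr_rep u v) //.
  have := GB ha hB hC; lia.
move=> /andP [ha' hA].
have := GD ha ha' hA hB hC.
move: (IH hA); rewrite expnS; lia.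
Qed.

Lemma Kr_lt x y C : Kr x y C < 2 ^ size C.
Proof.
elim: C => //= z C IH; rewrite expnS.
by case: (turn x y z) => /=; lia.
Qed.

Lemma D_pos u v C : C != [::] -> turn v u (head 0 C) -> ~~ turn u v (head 0 C) ->
  Kr u v C < Kr v u C.
Proof.
case: C => //= c C _ -> /negbTE ->.
have := Kr_lt u v C; lia.
Qed.

Lemma E_pos u v A : A != [::] -> turn (last 0 A) v u -> ~~ turn (last 0 A) u v ->
  (1 <= E u v A)%R.
Proof.
elim: A => //= a A IH _.
case: A IH => [|a' A] IH /=.
  by move=> -> /negbTE ->.
move=> h1 h2; have := IH isT h1 h2.
by case: (turn a v u); case: (turn a u v) => /=; lia.
Qed.

Lemma swap_gt u v A B C : adj u v -> all (out u v) A -> all (out u v) B ->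
  all (out u v) C ->
  (A = [::] \/ (turn (last 0 A) v u && ~~ turn (last 0 A) u v)) ->
  (C = [::] \/ (turn v u (head 0 C) && ~~ turn u v (head 0 C))) ->
  (A <> [::] \/ C <> [::]) ->
  Tr (A ++ u :: B ++ v :: C) < Tr (A ++ v :: B ++ u :: C).
Proof.
move=> ha hA hB hC hL hR hne.
have := TD ha hA hB hC.
have p1 := expn_gt0 2 (size A); have p2 := expn_gt0 2 (size C).
have hE : A = [::] \/ (1 <= E u v A)%R.
  case: A hL {hA p1 hne} => [|a A]; first by left.
  by case => // /andP [l1 l2]; right; apply: E_pos.
have hD : C = [::] \/ Kr u v C < Kr v u C.
  case: C hR {hC p2 hne} => [|c C]; first by left.
  by case => // /andP [l1 l2]; right; apply: D_pos.
case: hE => [eA | hE]; case: hD => [eC | hD].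
- by subst; case: hne.
- subst A => /=; lia.
- subst C => /=; lia.
- nia.
Qed.

Lemma decomp (s : seq nat) i j : i < j -> j < size s ->
  s = take i s ++ nth 0 s i :: (take (j - i.+1) (drop i.+1 s) ++ nth 0 s j :: drop j.+1 s).
Proof.
move=> hij hj.
have e1 : drop i s = nth 0 s i :: drop i.+1 s by rewrite (drop_nth 0) // (ltn_trans hij).
have e3 : drop j s = nth 0 s j :: drop j.+1 s by rewrite (drop_nth 0).
have e2 : drop i.+1 s = take (j - i.+1) (drop i.+1 s) ++ drop j s.
  by rewrite -{1}(cat_take_drop (j - i.+1) (drop i.+1 s)) drop_drop subnK.
by rewrite -e3 -e2 -e1 cat_take_drop.
Qed.

Lemma uniq_out (A B C : seq nat) u v : uniq (A ++ u :: B ++ v :: C) ->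
  [/\ all (out u v) A, all (out u v) B & all (out u v) C].
Proof.
move=> hu.
have H x : count_mem x (A ++ u :: B ++ v :: C) <= 1 by rewrite count_uniq_mem // leq_b1.
have P x (S : seq nat) : x \in S -> 0 < count_mem x S.
  by move=> hx; rewrite -has_count has_pred1.
have Hu := H u; have Hv := H v.
rewrite count_cat /= count_cat /= eqxx in Hu.
rewrite count_cat /= count_cat /= eqxx in Hv.
split; apply/allP => z hz; rewrite /out; apply/andP; split; apply/eqP => e; subst z;
  move: (P _ _ hz); case: (v == u) Hv Hu; case: (u == v); move=> /= Hv Hu; lia.
Qed.

Lemma goodL u v a : adj u v -> out u v a -> (a < u) = (u < v) ->
  turn a v u && ~~ turn a u v.
Proof. rewrite /adj /out !turnE => h1 /andP [h2 h3] h4; apply/andP; split; apply/idP; lia. Qed.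

Lemma goodR u v c : adj u v -> out u v c -> (v < c) = (u < v) ->
  turn v u c && ~~ turn u v c.
Proof. rewrite /adj /out !turnE => h1 /andP [h2 h3] h4; apply/andP; split; apply/idP; lia. Qed.

Lemma NBgen n s (hi : nat -> bool) : RC n s ->
  (forall j, j.+1 < n -> (nth 0 s j < nth 0 s j.+1) = ~~ hi j) ->
  forall i j, i < j -> j < n -> adj (nth 0 s i) (nth 0 s j) -> ~ (i = 0 /\ j = n.-1) ->
  (i = 0 \/ ~~ hi i.-1 = (nth 0 s i < nth 0 s j)) ->
  (j = n.-1 \/ ~~ hi j = (nth 0 s i < nth 0 s j)) -> False.
Proof.
case=> hp hmax hstep i j hij hjn ha hne hL hR.
have hn : size s = n by rewrite (perm_size hp) size_iota.
have hu : uniq s by rewrite (perm_uniq hp) iota_uniq.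
set u := nth 0 s i; set v := nth 0 s j.
set A := take i s; set B := take (j - i.+1) (drop i.+1 s); set C := drop j.+1 s.
have ed : s = A ++ u :: B ++ v :: C by apply: decomp => //; rewrite hn.
have [hA hB hC] : [/\ all (out u v) A, all (out u v) B & all (out u v) C].
  by apply: uniq_out; rewrite -ed.
have hps : perm_eq (A ++ v :: B ++ u :: C) s.
  by rewrite {1}ed; apply/permP => p; rewrite !count_cat /= !count_cat /=; lia.
have := hmax _ (perm_trans hps hp).
rewrite !tsumE (perm_size hps) !T_Tr [in Tr s]ed => hle.
have : Tr (A ++ u :: B ++ v :: C) < Tr (A ++ v :: B ++ u :: C).
  have szA : size A = i by rewrite size_take hn (ltn_trans hij hjn).
  have szC : size C = n - j.+1 by rewrite size_drop hn.
  apply: swap_gt => //.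
  - case: hL => [i0 | hL]; first by left; apply: size0nil; rewrite szA.
    case: (posnP i) => hi0; first by left; apply: size0nil; rewrite szA.
    right; have ei : i.-1.+1 = i := prednK hi0.
    have hl : last 0 A = nth 0 s i.-1.
      by rewrite -nth_last szA nth_take // -{2}ei.
    have hmA : last 0 A \in A by rewrite -nth_last mem_nth // szA; lia.
    apply: goodL => //; first exact: (all_in hA hmA).
    rewrite hl -hL; have := hstep i.-1; rewrite ei => -> //.
    exact: (ltn_trans hij hjn).
  - case: hR => [jn | hR]; first by left; apply: size0nil; rewrite szC jn; lia.
    case: (ltnP j.+1 n) => hj1; last by left; apply: size0nil; rewrite szC; lia.
    right; apply: goodR => //.
      by apply: (all_in hC); rewrite -nth0 mem_nth // szC; lia.
    by rewrite -nth0 nth_drop addn0 hstep.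
  - case: (posnP i) => hi0.
      right => eC; have := congr1 size eC; rewrite szC /=.
      by move=> h; apply: hne; split => //; lia.
    by left => eA; have := congr1 size eA; rewrite szA /=; lia.
by rewrite ltnNge -(leq_add2l (cnt (size s))) hle.
Qed.

Lemma ltSnF k : (k.+1 < k) = false.
Proof. by apply/negbTE; rewrite -leqNgt. Qed.

Section Comb.
Variables (n : nat) (f g : nat -> nat).
Hypothesis hf : forall i, i < n -> 0 < f i <= n.
Hypothesis hgf : forall i, i < n -> g (f i) = i.
Hypothesis hg : forall k, 0 < k <= n -> g k < n /\ f (g k) = k.
Hypothesis NB : forall i j, i < j -> j < n -> (f i = (f j).+1 \/ f j = (f i).+1) ->
  ~ (i = 0 /\ j = n.-1) -> (i = 0 \/ odd i = (f i < f j)) ->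
  (j = n.-1 \/ odd j = ~~ (f i < f j)) -> False.

Lemma propag (S : pred nat) :
  (forall k, 0 < k -> k < n -> S (g k) -> S (g k.+1)) ->
  forall k m, 0 < k -> k <= m -> m <= n -> S (g k) -> S (g m).
Proof.
move=> hcl k m hk; elim: m => [|m IH]; first by move=> h; exfalso; lia.
move=> hkm hm hS; case: (ltngtP k m.+1) => h; last by rewrite -h.
- by apply: hcl; [lia | lia | apply: IH => //; lia].
- by exfalso; lia.
Qed.

Lemma cl1 k : 0 < k -> k < n -> odd (g k) && (g k < n.-1) ->
  odd (g k.+1) && (g k.+1 < n.-1).
Proof.
move=> hk hkn.
have [hs fs] := hg (k:=k) ltac:(lia).
have [ht ft] := hg (k:=k.+1) ltac:(lia).
move: hs fs ht ft; set s := g k; set t := g k.+1 => hs fs ht ft /andP [os ls].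
apply/negPn/negP => hnt.
case: (ltngtP s t) => hst.
- apply: (NB hst ht).
  + by right; rewrite fs ft.
  + by case => s0; move: os; rewrite s0.
  + by right; rewrite fs ft ltnSn.
  + rewrite fs ft ltnSn /=; case: (boolP (odd t)) => ot; last by right.
    by left; move: hnt; rewrite ot /=; lia.
- apply: (NB hst hs).
  + by left; rewrite fs ft.
  + lia.
  + rewrite fs ft ltSnF /=; case: (boolP (odd t)) => ot; last by right.
    by exfalso; move: hnt; rewrite ot /=; lia.
  + by right; rewrite fs ft ltSnF os.
- by move: ft; rewrite -hst fs; lia.
Qed.

Lemma cl2 k : 0 < k -> k < n -> [|| g k == 0, g k == n.-1 | odd (g k)] ->
  [|| g k.+1 == 0, g k.+1 == n.-1 | odd (g k.+1)].
Proof.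
move=> hk hkn.
have [hs fs] := hg (k:=k) ltac:(lia).
have [ht ft] := hg (k:=k.+1) ltac:(lia).
move: hs fs ht ft; set s := g k; set t := g k.+1 => hs fs ht ft hS.
apply/negPn/negP; rewrite !negb_or => /and3P [/eqP t0 /eqP tn ot].
case: (ltngtP s t) => hst.
- apply: (NB hst ht).
  + by right; rewrite fs ft.
  + lia.
  + rewrite fs ft ltnSn; case/or3P: hS => [/eqP -> | /eqP sn | ->]; [by left | lia | by right].
  + by right; rewrite fs ft ltnSn (negbTE ot).
- apply: (NB hst hs).
  + by left; rewrite fs ft.
  + lia.
  + by right; rewrite fs ft ltSnF (negbTE ot).
  + rewrite fs ft ltSnF; case/or3P: hS => [/eqP s0 | /eqP sn | ->]; [lia | by left | by right].
- by move: ft; rewrite -hst fs; lia.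
Qed.

Lemma comb i : 0 < i < n.-1 ->
  (odd i -> f 0 < f i /\ f n.-1 < f i) /\ (~~ odd i -> f i < f 0 /\ f i < f n.-1).
Proof.
move=> /andP [i0 iN].
have hn0 : 0 < n by lia.
have hi := hf (i:=i) ltac:(lia).
have h0 := hf (i:=0) hn0.
have hN := hf (i:=n.-1) ltac:(lia).
have gi := hgf (i:=i) ltac:(lia).
have g0 := hgf (i:=0) hn0.
have gN := hgf (i:=n.-1) ltac:(lia).
have ne0 : f i != f 0 by apply/eqP => e; move: gi; rewrite e g0; lia.
have neN : f i != f n.-1 by apply/eqP => e; move: gi; rewrite e gN; lia.
have P1 : forall k m, 0 < k -> k <= m <= n -> odd (g k) && (g k < n.-1) ->
    odd (g m) && (g m < n.-1).
  move=> k m hk /andP [h1 h2] hS.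
  apply: (@propag (fun p => odd p && (p < n.-1)) _ k) => //.
  by move=> k' hk' hkn; apply: cl1.
have P2 : forall k m, 0 < k -> k <= m <= n -> [|| g k == 0, g k == n.-1 | odd (g k)] ->
    [|| g m == 0, g m == n.-1 | odd (g m)].
  move=> k m hk /andP [h1 h2] hS.
  apply: (@propag (fun p => [|| p == 0, p == n.-1 | odd p]) _ k) => //.
  by move=> k' hk' hkn; apply: cl2.
split => oi.
  split; rewrite ltnNge; apply/negP => hle.
  - have hlt : f i < f 0 by rewrite ltn_neqAle ne0.
    have := P1 (f i) (f 0); rewrite gi g0 oi iN /=.
    by move/(_ ltac:(lia) ltac:(lia) isT).
  - have hlt : f i < f n.-1 by rewrite ltn_neqAle neN.
    have := P1 (f i) (f n.-1); rewrite gi gN oi iN ltnn /= andbF.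
    by move/(_ ltac:(lia) ltac:(lia) isT).
split; rewrite ltnNge; apply/negP => hle.
- have hlt : f 0 < f i by rewrite ltn_neqAle eq_sym ne0.
  have := P2 (f 0) (f i); rewrite gi g0 eqxx /= => /(_ ltac:(lia) ltac:(lia) isT).
  by rewrite (negbTE oi) orbF => /orP [/eqP | /eqP]; lia.
- have hlt : f n.-1 < f i by rewrite ltn_neqAle eq_sym neN.
  have := P2 (f n.-1) (f i); rewrite gi gN eqxx orbT /= => /(_ ltac:(lia) ltac:(lia) isT).
  by rewrite (negbTE oi) orbF => /orP [/eqP | /eqP]; lia.
Qed.
End Comb.

Lemma odd_pred i : 0 < i -> odd i.-1 = ~~ odd i.
Proof. by case: i => //= i _; rewrite negbK. Qed.

Lemma perm_facts n s : is_perm n s ->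
  [/\ size s = n, uniq s, forall i, i < n -> 0 < nth 0 s i <= n &
      forall k, 0 < k <= n -> index k s < n /\ nth 0 s (index k s) = k].
Proof.
move=> hp.
have hn : size s = n by rewrite (perm_size hp) size_iota.
have hmem x : (x \in s) = (0 < x <= n).
  by rewrite (perm_mem hp) mem_iota; apply/idP/idP; lia.
split => //; first by rewrite (perm_uniq hp) iota_uniq.
  by move=> i hi; rewrite -hmem mem_nth // hn.
move=> k hk; rewrite -hmem in hk; split; last exact: nth_index.
by rewrite -hn index_mem.
Qed.

Unset Implicit Arguments.

Theorem mainTheorem3 (n : nat) (pi : seq nat) :
  2 <= n -> RC n pi ->
  (alternating pi ->
     forall i, 1 < i < n ->
       (~~ odd i -> entry pi i > maxn (entry pi 1) (entry pi n)) /\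
       (odd i -> entry pi i < minn (entry pi 1) (entry pi n))) /\
  (rev_alternating pi ->
     forall i, 1 < i < n ->
       (~~ odd i -> entry pi i < minn (entry pi 1) (entry pi n)) /\
       (odd i -> entry pi i > maxn (entry pi 1) (entry pi n))).
Proof.
move=> hn2 hRC.
have [hsz hu hf hg] := perm_facts hRC.1.
have hgf : forall i, i < n -> index (nth 0 pi i) pi = i.
  by move=> i hi; rewrite index_uniq // hsz.
rewrite /entry /=.
split => halt i /andP [i1 iN].
- have hstep : forall j, j.+1 < n -> (nth 0 pi j < nth 0 pi j.+1) = ~~ odd j.
    move=> j hj; have := halt j.+1; rewrite hsz /entry /= => /(_ ltac:(lia)).
    by case: (odd j) => /= h; [apply/negbTE; rewrite -leqNgt ltnW | ].
  have NBc : forall a b, a < b -> b < n ->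
      (nth 0 pi a = (nth 0 pi b).+1 \/ nth 0 pi b = (nth 0 pi a).+1) ->
      ~ (a = 0 /\ b = n.-1) -> (a = 0 \/ odd a = (nth 0 pi a < nth 0 pi b)) ->
      (b = n.-1 \/ odd b = ~~ (nth 0 pi a < nth 0 pi b)) -> False.
    move=> a b hab hb hadj hne hL hR.
    apply: (@NBgen n pi odd hRC hstep a b hab hb) => //.
    - by rewrite /adj; case: hadj => ->; rewrite eqxx ?orbT.
    - case: hL => [-> | h]; first by left.
      case: (posnP a) => ha; first by left.
      by right; rewrite odd_pred // h negbK.
    - by case: hR => [-> | h]; [left | right; rewrite h negbK].
  have := @comb n (nth 0 pi) (fun k => index k pi) hf hgf hg NBc i.-1 ltac:(lia).
  have -> : odd i.-1 = ~~ odd i by rewrite odd_pred //; lia.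
  rewrite negbK => [[H1 H2]]; split => oi.
    by have := H1 oi; rewrite gtn_max => -[-> ->].
  by have := H2 oi; rewrite leq_min => -[-> ->].
- have hstep : forall j, j.+1 < n -> (nth 0 pi j < nth 0 pi j.+1) = odd j.
    move=> j hj; have := halt j.+1; rewrite hsz /entry /= => /(_ ltac:(lia)).
    by case: (odd j) => /= h; [ | apply/negbTE; rewrite -leqNgt ltnW].
  set f := fun i => n.+1 - nth 0 pi i.
  set g := fun k => index (n.+1 - k) pi.
  have hf' : forall i, i < n -> 0 < f i <= n.
    by move=> a ha; rewrite /f; have := hf a ha; lia.
  have hgf' : forall i, i < n -> g (f i) = i.
    move=> a ha; rewrite /g /f; have := hf a ha => hb.
    by rewrite subKn ?hgf //; lia.
  have hg' : forall k, 0 < k <= n -> g k < n /\ f (g k) = k.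
    move=> k hk; have [h1 h2] := hg (n.+1 - k) ltac:(lia).
    by rewrite /f /g h2; split => //; lia.
  have NBc : forall a b, a < b -> b < n ->
      (f a = (f b).+1 \/ f b = (f a).+1) ->
      ~ (a = 0 /\ b = n.-1) -> (a = 0 \/ odd a = (f a < f b)) ->
      (b = n.-1 \/ odd b = ~~ (f a < f b)) -> False.
    move=> a b hab hb hadj hne hL hR.
    have ha := hf a ltac:(lia); have hb' := hf b hb.
    have ec : (f a < f b) = ~~ (nth 0 pi a < nth 0 pi b).
      by rewrite /f; case: hadj; rewrite /f => e; apply/idP/idP; lia.
    rewrite ec in hL hR.
    apply: (@NBgen n pi (fun j => ~~ odd j) hRC _ a b hab hb) => //.
    - by move=> j hj; rewrite hstep // negbK.
    - by rewrite /adj; case: hadj; rewrite /f => e; apply/orP; [right | left]; apply/eqP; lia.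
    - case: hL => [-> | h]; first by left.
      case: (posnP a) => ha0; first by left.
      by right; rewrite negbK odd_pred // h negbK.
    - by case: hR => [-> | h]; [left | right; rewrite negbK h negbK].
  have := @comb n f g hf' hgf' hg' NBc i.-1 ltac:(lia).
  have -> : odd i.-1 = ~~ odd i by rewrite odd_pred //; lia.
  rewrite negbK /f => [[H1 H2]].
  have h0 := hf 0 ltac:(lia); have hN := hf n.-1 ltac:(lia); have hI := hf i.-1 ltac:(lia).
  split => oi.
    by have := H1 oi; rewrite leq_min; lia.
  by have := H2 oi; rewrite gtn_max; lia.
Qed.
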